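(* Let $n\ge 2$ be an integer, $p,q\in\mathbb{R}$ with $q>0$, and let $M$ be a real $n\times n$ matrix whose $n^2$ entries are a permutation of the numbers $p, p+q, \dots, p+(n^2-1)q$. Set $$r := \frac pq + \frac{n^2-1}{2},\quad \rho := \frac{n^3+n^2+n+1}{12},\quad \sigma := nq^2\left(r^2 + \frac{n^4-1}{12}\right).$$ Then: if $r^2 < \rho$: $|\det M| \le \sigma^{n/2}$; if $r^2 = \rho$: $|\det M| \le n^n q^n |r| \rho^{\frac{n-1}{2}} = \sigma^{n/2}$; if $r^2 > \rho$: $|\det M| \le n^n q^n |r| \rho^{\frac{n-1}{2}} < \sigma^{n/2}$. *)

(* Defs.v *)
From HB Require Import structures.
From mathcomp Require Import all_boot all_order all_algebra.
Set Implicit Arguments. Unset Strict Implicit. Unset Printing Implicit Defensive.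
Import Order.TTheory GRing.Theory Num.Theory.
Local Open Scope ring_scope.

Definition r_of (R : rcfType) (n : nat) (p q : R) : R :=
  p / q + (n%:R ^+ 2 - 1) / 2.
Definition rho_of (R : rcfType) (n : nat) : R :=
  (n%:R ^+ 3 + n%:R ^+ 2 + n%:R + 1) / 12.
Definition sigma_of (R : rcfType) (n : nat) (p q : R) : R :=
  n%:R * q ^+ 2 * (r_of n p q ^+ 2 + (n%:R ^+ 4 - 1) / 12).

(* x^(k/2) for x >= 0, written as (sqrt x)^k. *)
Definition halfpow (R : rcfType) (x : R) (k : nat) : R := Num.sqrt x ^+ k.

(* Main.v *)
From HB Require Import structures.
From mathcomp Require Import all_boot all_order all_algebra.
From mathcomp Require Import ring lra.
Require Import Defs.
Import Order.TTheory GRing.Theory Num.Theory.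
Local Open Scope ring_scope.

Section Main.

Variable R : rcfType.

Lemma rowsqE m (u : 'rV[R]_m) : (u *m u^T) 0 0 = \sum_j u 0 j ^+ 2.
Proof. by rewrite mxE; apply: eq_bigr => j _; rewrite mxE expr2. Qed.

Lemma rowsq_ge0 m (u : 'rV[R]_m) : 0 <= (u *m u^T) 0 0.
Proof. by rewrite rowsqE sumr_ge0 // => j _; rewrite sqr_ge0. Qed.

Lemma rowsq_eq0 m (u : 'rV[R]_m) : (u *m u^T) 0 0 = 0 -> u = 0.
Proof.
rewrite rowsqE => /psumr_eq0P H; apply/rowP => j; rewrite mxE.
by apply/eqP; rewrite -sqrf_eq0; apply/eqP; apply: H => // i _; rewrite sqr_ge0.
Qed.

Lemma mx11_tr (X : 'M[R]_1) : X^T = X.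
Proof. by rewrite [X]mx11_scalar tr_scalar_mx. Qed.

Lemma gram k m (A : 'M[R]_(k, m)) :
  0 <= \det (A *m A^T) <= \prod_(i < k) \sum_(j < m) A i j ^+ 2.
Proof.
elim: k A => [|k IH] A.
  by rewrite det_mx00 big_ord0 ler01 lexx.
have [a [B ->]] : exists (a : 'rV_m) (B : 'M_(k, m)), A = col_mx a B.
  by exists (usubmx (A : 'M_(1 + k, m))), (dsubmx (A : 'M_(1 + k, m))); rewrite vsubmxK.
rewrite big_ord_recl.
have -> : \sum_(j < m) col_mx a B ord0 j ^+ 2 = (a *m a^T) 0 0.
  rewrite rowsqE; apply: eq_bigr => j _.
  have -> : (ord0 : 'I_(1 + k)) = lshift k 0 by apply: val_inj.
  by rewrite col_mxEu.
have -> : \prod_(i < k) \sum_(j < m) col_mx a B (lift ord0 i) j ^+ 2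
      = \prod_(i < k) \sum_(j < m) B i j ^+ 2.
  apply: eq_bigr => i _; apply: eq_bigr => j _.
  have -> : (lift ord0 i : 'I_(1 + k)) = rshift 1 i by apply: val_inj.
  by rewrite col_mxEd.
have [IH0 IH1] := andP (IH B).
set G' := B *m B^T.
have Pge0 : 0 <= \prod_(i < k) \sum_(j < m) B i j ^+ 2.
  by apply: prodr_ge0 => i _; apply: sumr_ge0 => j _; rewrite sqr_ge0.
case: (boolP (G' \in unitmx)) => hU; last first.
  have : \det G' == 0 by move: hU; rewrite unitmxE unitfE negbK.
  case/det0P => v vn0 vG.
  have vB : v *m B = 0.
    apply: rowsq_eq0; rewrite trmx_mul -mulmxA (mulmxA B) -/G' mulmxA vG mul0mx mxE.
    idtac.
    by [].

  have -> : \det (col_mx a B *m (col_mx a B)^T) = 0.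
    apply/eqP/det0P; exists (row_mx (0 : 'rV_1) v).
      apply: contra vn0 => /eqP; rewrite -row_mx0 => /eq_row_mx [_ ->] //.
    by rewrite mulmxA mul_row_col mul0mx vB add0r mul0mx.
  by rewrite lexx /= mulr_ge0 // rowsq_ge0.
rewrite (tr_col_mx a B).
change (0 <= @determinant R (1 + k) (@mulmx R (1+k) m (1+k) (col_mx a B) (row_mx a^T B^T)) <= (a *m a^T) 0 0 * \prod_(i < k) \sum_(j < m) B i j ^+ 2).
rewrite mul_col_row -/G'.
set w := a *m B^T *m invmx G' *m B.
have G'tr : G'^T = G' by rewrite /G' trmx_mul trmxK.
have E : block_mx (a *m a^T) (a *m B^T) (B *m a^T) G' =
   block_mx 1%:M (a *m B^T *m invmx G') 0 1%:M *m
   block_mx (a *m a^T - w *m a^T) 0 (B *m a^T) G'.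
  rewrite mulmx_block !mul1mx !mul0mx ?mulmx0 !add0r ?addr0.
  by rewrite -(mulmxA _ (invmx G') G') mulVmx // mulmx1 /w (mulmxA _ B) subrK.
rewrite E det_mulmx det_ublock !det1 !mul1r det_lblock det_mx11.
have wwT : w *m w^T = w *m a^T.
  rewrite /w !trmx_mul trmx_inv G'tr trmxK.
  rewrite -!mulmxA; congr (_ *m _); congr (_ *m _); congr (_ *m _).
  by rewrite !mulmxA -/G' mulmxV // mul1mx.
have awT : a *m w^T = w *m a^T by rewrite -(trmxK a) -trmx_mul mx11_tr trmxK.
have Ec : a *m a^T - w *m a^T = (a - w) *m (a - w)^T.
  by rewrite linearB /= mulmxBl !mulmxBr awT wwT opprB addrA subrK.
have c0 : 0 <= (a *m a^T - w *m a^T) 0 0 by rewrite Ec rowsq_ge0.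
have c1 : (a *m a^T - w *m a^T) 0 0 <= (a *m a^T) 0 0.
  have -> : (a *m a^T - w *m a^T) 0 0 = (a *m a^T) 0 0 - (w *m w^T) 0 0.
    by rewrite -wwT !mxE -sumrN -big_split; apply: eq_bigr => j _; rewrite !mxE.
  by rewrite gerDl oppr_le0 rowsq_ge0.
rewrite mulr_ge0 //= ler_pM //.
Qed.

Lemma hadamard n (A : 'M[R]_n) :
  \det A ^+ 2 <= \prod_(i < n) \sum_(j < n) A i j ^+ 2.
Proof.
case/andP: (@gram n n A) => _; by rewrite det_mulmx det_tr expr2.
Qed.



Lemma cs d (x : 'I_d -> R) : (\sum_i x i) ^+ 2 <= d%:R * \sum_i x i ^+ 2.
Proof.
case: d x => [|d] x; first by rewrite !big_ord0 expr0n /= mul0r.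
set T := \sum_i x i; set m := T / d.+1%:R.
have h : 0 <= \sum_i (x i - m) ^+ 2 by apply: sumr_ge0 => i _; rewrite sqr_ge0.
have e : \sum_i (x i - m) ^+ 2 = \sum_i x i ^+ 2 - (m *+ 2) * T + d.+1%:R * m ^+ 2.
  under eq_bigr do rewrite sqrrB.
  rewrite big_split /= big_split /= sumrN sumr_const card_ord -mulr_natl.
  by rewrite sumrMnl -mulr_suml -/T mulr_natl; ring.
have d0 : d.+1%:R != 0 :> R by rewrite pnatr_eq0.
have E2 : d.+1%:R * (\sum_i x i ^+ 2 - (m *+ 2) * T + d.+1%:R * m ^+ 2) = d.+1%:R * \sum_i x i ^+ 2 - T ^+ 2.
  by rewrite /m mulr2n; field; rewrite -natr1 addrC in d0.
by rewrite -subr_ge0 -E2 mulr_ge0 // -e.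
Qed.

Lemma amgm d (c : 'I_d -> R) : (forall i, 0 <= c i) ->
  \prod_i c i <= ((\sum_i c i) / d%:R) ^+ d.
Proof.
move=> h; have [+ _] := leif_AGM (A := predT) (fun i _ => h i).
by rewrite card_ord.
Qed.

Lemma householder n : exists H : 'M[R]_n.+2,
  [/\ H *m H = 1%:M, H^T = H & forall j, H 0 j = (Num.sqrt n.+2%:R)^-1].
Proof.
set s := Num.sqrt n.+2%:R; set t := s^-1.
have d0 : 0 < n.+2%:R :> R by rewrite ltr0n.
have s0 : 0 < s by rewrite sqrtr_gt0.
have ht2 : t ^+ 2 * n.+2%:R = 1 by rewrite /t exprVn sqr_sqrtr ?ltW // mulVf // gt_eqF.
have t0 : 0 < t by rewrite invr_gt0.
have t1 : t < 1.
  have : t ^+ 2 < 1.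
    by rewrite -ht2 -[X in X < _]mulr1 ltr_pM2l ?exprn_gt0 // ltr1n.
  by apply: contraTT; rewrite -!leNgt => h; rewrite exprn_ege1.
pose v : 'rV[R]_n.+2 := \row_j ((j == 0)%:R - t).
set nv := (v *m v^T) 0 0.
have nvE : nv = 2 - 2 * t.
  rewrite /nv rowsqE big_ord_recl /= mxE eqxx.
  rewrite (eq_bigr (fun _ => t ^+ 2)); last first.
    by move=> i _; rewrite mxE (_ : (lift ord0 i == 0) = false) ?sub0r ?sqrrN.
  rewrite sumr_const card_ord -[t ^+ 2 *+ n.+1]mulr_natr.
  have : t ^+ 2 * (n.+1%:R + 1) = 1 by rewrite natr1 ht2.
  move=> h.
  have -> : t ^+ 2 * n.+1%:R = 1 - t ^+ 2 by rewrite -[X in _ = X - _]h; ring.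
  rewrite [true%:R]/=; ring.
have nv0 : nv != 0 by rewrite nvE gt_eqF //; lra.
set c := 2 / nv.
exists (1%:M - c *: (v^T *m v)); split.
- have PP : v^T *m v *m (v^T *m v) = nv *: (v^T *m v).
    by rewrite mulmxA -(mulmxA _ v) [v *m _]mx11_scalar mul_mx_scalar -scalemxAl.
  rewrite mulmxBl !mulmxBr !mul1mx !mulmx1 -!scalemxAl -!scalemxAr scalerA PP scalerA.
  have -> : c * c * nv = c *+ 2 by rewrite -mulrA /c mulfVK // mulr_natr.
  by rewrite -scalerMnl opprB mulr2n addrK subrK.
- by rewrite linearB /= trmx1 linearZ /= trmx_mul trmxK.
- move=> j; rewrite !mxE big_ord1 !mxE eqxx /= /c nvE.
  have h1 : 2 - 2 * t != 0 by rewrite gt_eqF //; lra.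
  by rewrite (eq_sym 0 j); field.
Qed.
Lemma refined n (N : 'M[R]_n.+2) :
  exists (X : R) (c : 'I_n.+1 -> R),
   [/\ \det N ^+ 2 <= X * \prod_i c i, (forall i, 0 <= c i),
       X + \sum_i c i = \sum_i \sum_j N i j ^+ 2
     & (\sum_i \sum_j N i j) ^+ 2 <= n.+2%:R ^+ 2 * X ].
Proof.
have [H [HH Htr H0]] := householder n.
set t := (Num.sqrt n.+2%:R)^-1 in H0.
have ht2 : t ^+ 2 * n.+2%:R = 1.
  by rewrite /t exprVn sqr_sqrtr ?ler0n // mulVf // pnatr_eq0.
pose A := H *m N^T.
pose rn i := \sum_j A i j ^+ 2.
exists (rn 0), (fun i => rn (lift ord0 i)); split.
- have := @hadamard _ A; rewrite big_ord_recl -/(rn 0).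
  suff -> : \det A ^+ 2 = \det N ^+ 2 by [].
  have dH : \det H ^+ 2 = 1 by rewrite expr2 -det_mulmx HH det1.
  by rewrite det_mulmx det_tr exprMn dH mul1r.
- by move=> i; apply: sumr_ge0 => j _; rewrite sqr_ge0.
- rewrite -(big_ord_recl _ rn).
  have rnE i : rn i = (A *m A^T) i i.
    by rewrite /rn [RHS]mxE; apply: eq_bigr => j _; rewrite [A^T j i]mxE expr2.
  rewrite (eq_bigr _ (fun i _ => rnE i)) -/(mxtrace _).
  have -> : A *m A^T = H *m (N^T *m N *m H) by rewrite /A trmx_mul trmxK Htr !mulmxA.
  by rewrite mxtrace_mulC -(mulmxA _ H H) HH mulmx1 /mxtrace exchange_big; apply: eq_bigr => i _; rewrite mxE; apply: eq_bigr => k _; rewrite mxE expr2.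
- have A0 j : A 0 j = t * \sum_k N j k.
    by rewrite mxE mulr_sumr; apply: eq_bigr => k _; rewrite H0 mxE.
  have -> : rn 0 = t ^+ 2 * \sum_j (\sum_k N j k) ^+ 2.
    by rewrite /rn mulr_sumr; apply: eq_bigr => j _; rewrite A0 exprMn.
  set Q := \sum_j (\sum_k N j k) ^+ 2.
  have -> : n.+2%:R ^+ 2 * (t ^+ 2 * Q) = n.+2%:R * (t ^+ 2 * n.+2%:R) * Q by ring.
  by rewrite ht2 mulr1 cs.
Qed.

Lemma sumk N : \sum_(k < N) (k%:R : R) = N%:R * (N%:R - 1) / 2.
Proof.
elim: N => [|N IH]; first by rewrite big_ord0 mul0r mul0r.
by rewrite big_ord_recr /= IH -natr1; field.
Qed.

Lemma sumk2 N : \sum_(k < N) (k%:R ^+ 2 : R) = N%:R * (N%:R - 1) * (2 * N%:R - 1) / 6.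
Proof.
elim: N => [|N IH]; first by rewrite big_ord0 !mul0r.
by rewrite big_ord_recr /= IH -natr1; field.
Qed.

Lemma sum_perm n (M : 'M[R]_n) p q (f : 'I_n * 'I_n -> 'I_(n * n)) :
  bijective f -> (forall i j, M i j = p + (f (i, j) : nat)%:R * q) ->
  forall F : R -> R, \sum_i \sum_j F (M i j) = \sum_(k < n * n) F (p + k%:R * q).
Proof.
move=> bf hM F; rewrite pair_big /= (reindex f) /=; last exact: onW_bij.
by apply: eq_bigr => -[i j] _ /=; rewrite hM.
Qed.

Lemma amgm_strict k (a b : R) : 0 <= a -> 0 <= b -> a != b ->
  k.+2%:R ^+ k.+2 * (a * b ^+ k.+1) < (a + k.+1%:R * b) ^+ k.+2.
Proof.
move=> a0 b0 ab.
pose E (i : 'I_k.+2) := if i == ord0 then a else b.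
have E0 i : 0 <= E i by rewrite /E; case: ifP.
have := leif_AGM (A := predT) (fun i _ => E0 i).
move/lt_leif; rewrite card_ord.
have -> : [forall i in predT, forall j in predT, E i == E j] = false.
  apply/negbTE/negP => /forallP /(_ ord0) /implyP /(_ isT) /forallP /(_ (lift ord0 ord0)) /implyP /(_ isT).
  by rewrite /E /= (negbTE ab).
have pE : \prod_(i in predT) E i = a * b ^+ k.+1.
  rewrite (big_ord_recl _ E) /E eqxx (eq_bigr (fun _ => b)) ?prodr_const ?card_ord //.
have sE : \sum_(i in predT) E i = a + k.+1%:R * b.
  rewrite (big_ord_recl _ E) /E eqxx (eq_bigr (fun _ => b)) ?sumr_const ?card_ord ?mulr_natl //.
rewrite pE sE /= => h.
have d0 : (0 : R) < k.+2%:R by rewrite ltr0n.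
rewrite -[X in _ < X ^+ _](@divfK _ k.+2%:R) ?gt_eqF // exprMn mulrC ltr_pM2r //.
by rewrite exprn_gt0.
Qed.

Lemma normK2 (x : R) : `|x| ^+ 2 = x ^+ 2.
Proof. by rewrite real_normK ?num_real. Qed.

Lemma sq_le (a b : R) : 0 <= b -> a ^+ 2 <= b ^+ 2 -> `|a| <= b.
Proof.
move=> b0 h; rewrite -(ler_pXn2r (n:=2)) // ?nnegrE ?normr_ge0 //.
by rewrite normK2.
Qed.

Lemma sqrtX2 (x : R) k : 0 <= x -> (Num.sqrt x ^+ k) ^+ 2 = x ^+ k.
Proof. by move=> x0; rewrite -exprM mulnC exprM sqr_sqrtr. Qed.

Lemma BEgen (D q r rho : R) k : 0 <= rho ->
  (D ^+ k.+2 * q ^+ k.+2 * `|r| * Num.sqrt rho ^+ k.+1) ^+ 2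
  = (q ^+ 2 * D ^+ 2 * r ^+ 2) * (q ^+ 2 * D ^+ 2 * rho) ^+ k.+1.
Proof.
move=> h.
rewrite (exprMn _ (q ^+ 2 * D ^+ 2) rho) (exprMn _ (q ^+ 2) (D ^+ 2)) (exprAC q 2 k.+1).
rewrite (exprAC D 2 k.+1) -(@sqrtX2 rho k.+1 h) -(normK2 r) (exprS D k.+1) (exprS q k.+1).
move: (D ^+ k.+1) (q ^+ k.+1) (Num.sqrt rho ^+ k.+1) `|r| => a b c e; ring.
Qed.

Lemma expS2 (x : R) k : (x ^+ k.+1) ^+ 2 = x ^+ 2 * (x ^+ 2) ^+ k.
Proof. by rewrite -exprM mulnC exprM exprS. Qed.

End Main.


Theorem mainTheorem7 (R : rcfType) (n : nat) (p q : R) (M : 'M[R]_n)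
  (hn : (2 <= n)%N) (hq : 0 < q)
  (hM : exists f : 'I_n * 'I_n -> 'I_(n * n),
          bijective f /\ forall i j, M i j = p + (f (i, j) : nat)%:R * q) :
  let r := r_of n p q in
  let rho := rho_of R n in
  let sigma := sigma_of n p q in
  let B := n%:R ^+ n * q ^+ n * `|r| * halfpow rho n.-1 in
  [/\ r ^+ 2 < rho -> `|\det M| <= halfpow sigma n,
      r ^+ 2 = rho -> `|\det M| <= B /\ B = halfpow sigma n
    & rho < r ^+ 2 -> `|\det M| <= B /\ B < halfpow sigma n].
Proof.
case: n M hM hn => [|[|n]] M hM hn //; move=> r rho sigma B.
have [f [bf hf]] := hM.
have q0 : q != 0 by rewrite gt_eqF.
have d0 : (0 : R) < n.+2%:R by rewrite ltr0n.
have ST : \sum_i \sum_j M i j = n.+2%:R ^+ 2 * q * r.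
  have -> := @sum_perm R _ _ _ _ _ bf hf (fun x => x).
  rewrite big_split /= sumr_const card_ord -mulr_suml sumk -mulr_natl natrM /r /r_of.
  by field.
have SS : \sum_i \sum_j M i j ^+ 2 = n.+2%:R * sigma.
  have -> := @sum_perm R _ _ _ _ _ bf hf (fun x => x ^+ 2).
  transitivity (\sum_(k < n.+2 * n.+2) (p ^+ 2 + (2 * p * q) * k%:R + q ^+ 2 * k%:R ^+ 2)).
    by apply: eq_bigr => k _; ring.
  rewrite !big_split /= sumr_const card_ord -!mulr_sumr sumk sumk2 /sigma /sigma_of /r /r_of.
  by rewrite -mulr_natl natrM; field.
have Sge0 : 0 <= \sum_i \sum_j M i j ^+ 2.
  by apply: sumr_ge0 => i _; apply: sumr_ge0 => j _; rewrite sqr_ge0.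
have sig0 : 0 <= sigma.
  by move: Sge0; rewrite SS pmulr_rge0.
have hp0 : forall x k, 0 <= x -> 0 <= halfpow x k.
  by move=> x k x0; rewrite /halfpow exprn_ge0 // sqrtr_ge0.
have c1 : `|\det M| <= halfpow sigma n.+2.
  apply: sq_le; first exact: hp0.
  rewrite /halfpow sqrtX2 //.
  apply: le_trans (@hadamard R _ M) _.
  have := @amgm R _ (fun i => \sum_j M i j ^+ 2) _.
  rewrite SS mulrC mulKf ?gt_eqF //; apply.
  by move=> i; apply: sumr_ge0 => j _; rewrite sqr_ge0.
have rho0 : 0 < rho.
  by rewrite /rho /rho_of divr_gt0 // ?ltr0n // addr_gt0 // ?addr_gt0 // ?exprn_gt0.
set K := q ^+ 2 * n.+2%:R ^+ 2 * rho.
set Y := q ^+ 2 * n.+2%:R ^+ 2 * r ^+ 2.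
have SYK : n.+2%:R * sigma = Y + n.+1%:R * K.
  by rewrite /Y /K /sigma /sigma_of -/r /rho /rho_of -!natr1; field.
have BE : B ^+ 2 = Y * K ^+ n.+1.
  by rewrite /B /halfpow BEgen // ltW.
have B0 : 0 <= B.
  apply: mulr_ge0; last exact: hp0 (ltW rho0).
  apply: mulr_ge0; last exact: normr_ge0.
  by apply: mulr_ge0; apply: exprn_ge0; rewrite ?ler0n ?ltW.
have c23 : rho <= r ^+ 2 -> `|\det M| <= B.
  move=> hr; apply: sq_le => //; rewrite BE.
  have [X [c [h1 h2 h3 h4]]] := @refined R _ M.
  rewrite SS SYK in h3; rewrite ST in h4.
  have r2 : 0 < r ^+ 2 by apply: lt_le_trans hr.
  have XY : Y <= X.
    have dd : 0 < n.+2%:R ^+ 2 :> R by rewrite exprn_gt0.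
    rewrite -(ler_pM2l dd); apply: le_trans h4; rewrite /Y le_eqVlt; apply/orP; left; apply/eqP; ring.
  pose lam := rho / r ^+ 2.
  have lam0 : 0 < lam by rewrite divr_gt0.
  have lam1 : lam <= 1 by rewrite ler_pdivrMr // mul1r.
  have lamY : lam * Y = K.
    by rewrite /lam /Y /K; field; apply: contraTneq r2 => ->; rewrite expr0n ltxx.
  pose w (i : 'I_n.+2) := if unlift ord0 i is Some j then c j else lam * X.
  have pw : \prod_i w i = lam * X * \prod_i c i.
    by rewrite big_ord_recl /w unlift_none; congr (_ * _); apply: eq_bigr => i _; rewrite liftK.
  have sw : \sum_i w i = lam * X + \sum_i c i.
    by rewrite big_ord_recl /w unlift_none; congr (_ + _); apply: eq_bigr => i _; rewrite liftK.
  have w0 : forall i, 0 <= w i.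
    move=> i; rewrite /w; case: (unlift ord0 i) => [j|]; first exact: h2.
    apply: mulr_ge0; [exact: ltW | apply: le_trans XY; rewrite /Y].
    by apply: mulr_ge0; [apply: mulr_ge0|]; exact: sqr_ge0.
  have am := @amgm R _ w w0.
  have sw1 : \sum_i w i <= n.+2%:R * K.
    have hc : \sum_i c i = Y + n.+1%:R * K - X by rewrite -h3; ring.
    have hh : 0 <= (1 - lam) * (X - Y) by rewrite mulr_ge0 // subr_ge0.
    rewrite sw hc -lamY -natr1; move: hh lamY; nra.
  have sw0 : 0 <= \sum_i w i by apply: sumr_ge0 => i _.
  have am2 : ((\sum_i w i) / n.+2%:R) ^+ n.+2 <= K ^+ n.+2.
    apply: lerXn2r.
    - by rewrite nnegrE; apply: divr_ge0; rewrite ?ler0n.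
    - by rewrite nnegrE /K; apply: mulr_ge0; [apply: mulr_ge0; exact: sqr_ge0 | exact: ltW].
    - by rewrite ler_pdivrMr // mulrC.
  have : lam * (X * \prod_i c i) <= lam * (Y * K ^+ n.+1).
    by rewrite mulrA -pw (le_trans am (le_trans am2 _)) // exprS -lamY mulrA.
  by rewrite ler_pM2l // => /(le_trans h1).
split.
- by move=> _; exact: c1.
- move=> hr; split; first by apply: c23; rewrite hr.
  apply/eqP; rewrite -(eqrXn2 (n:=2)) // ?hp0 // BE /halfpow sqrtX2 //.
  have -> : sigma = K.
    apply: (mulfI (lt0r_neq0 d0)); rewrite SYK /Y hr -/K -natr1; ring.
  by rewrite /Y hr -/K -exprS.
- move=> hr; split; first by apply: c23; rewrite ltW.
  rewrite -(ltr_pXn2r (n:=2)) // ?nnegrE ?hp0 // BE /halfpow sqrtX2 //.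
  have sE : sigma = (q ^+ 2 * n.+2%:R) * (r ^+ 2 + n.+1%:R * rho).
    by apply: (mulfI (lt0r_neq0 d0)); rewrite SYK /Y /K; ring.
  have -> : Y * K ^+ n.+1 = (q ^+ 2 * n.+2%:R) ^+ n.+2 * (n.+2%:R ^+ n.+2 * (r ^+ 2 * rho ^+ n.+1)).
    rewrite /Y /K (exprMn _ (q ^+ 2 * n.+2%:R ^+ 2) rho) (exprMn _ (q ^+ 2) (n.+2%:R ^+ 2)).
    rewrite (exprMn _ (q ^+ 2) n.+2%:R) (exprAC n.+2%:R 2 n.+1) (exprS n.+2%:R n.+1).
    rewrite (exprS (q ^+ 2) n.+1).
    move: (n.+2%:R ^+ n.+1) ((q ^+ 2) ^+ n.+1) (rho ^+ n.+1) => a b c; ring.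
  rewrite sE (exprMn _ (q ^+ 2 * n.+2%:R)) ltr_pM2l; last first.
    by rewrite exprn_gt0 // mulr_gt0 // exprn_gt0.
  apply: amgm_strict; rewrite ?sqr_ge0 ?ltW //.
  by rewrite gt_eqF.
Qed.
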